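(* Let $\mathbb{X}$ be a real Banach space such that $\operatorname{Sm}\mathbb{X}$ is a dense $G_\delta$ subset of $\mathbb{X}$, and let $U\subseteq\mathbb{X}$ be dense in $\mathbb{X}$. If a bounded linear operator $T:\mathbb{X}\to\mathbb{X}$ preserves Birkhoff–James orthogonality at each point of $U$, then $T$ is a scalar multiple of an isometry (there is $\lambda\ge0$ with $\|Tx\|=\lambda\|x\|$ for all $x$).
   Context: $u\perp_B v$ means $\|u+\lambda v\|\ge\|u\|$ for all real $\lambda$. $T$ preserves Birkhoff–James orthogonality at $x$ if $x\perp_B v$ implies $Tx\perp_B Tv$ for all $v$. For non-zero $z$, $J(z)=\{f\in\mathbb{X}^*:\|f\|=1,\ f(z)=\|z\|\}$; $z$ is smooth if $J(z)$ is a singleton; $\operatorname{Sm}\mathbb{X}$ is the set of smooth points. *)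

(* Defs.v *)
From HB Require Import structures.
From mathcomp Require Import all_boot all_order all_algebra.
From mathcomp Require Import all_classical all_reals all_analysis.
Set Implicit Arguments. Unset Strict Implicit. Unset Printing Implicit Defensive.
Import Order.TTheory GRing.Theory Num.Theory.
Import numFieldNormedType.Exports.
Local Open Scope classical_set_scope.
Local Open Scope ring_scope.

Definition BJorth (R : realType) (X : normedModType R) (u v : X) : Prop :=
  forall l : R, `|u| <= `|u + l *: v|.

Definition preserves_BJ_at (R : realType) (X : normedModType R)
  (T : X -> X) (x : X) : Prop :=
  forall v : X, BJorth x v -> BJorth (T x) (T v).

Definition is_dual_elt (R : realType) (X : normedModType R) (f : X -> R) : Prop :=
  [/\ (forall x y : X, f (x + y) = f x + f y),
      (forall (a : R) (x : X), f (a *: x) = a * f x) &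
      continuous f].

Definition dual_norm (R : realType) (X : normedModType R) (f : X -> R) : R :=
  sup [set `|f y| | y in [set y : X | `|y| <= 1]].

Definition Jset (R : realType) (X : normedModType R) (z : X) : set (X -> R) :=
  [set f | is_dual_elt f /\ dual_norm f = 1 /\ f z = `|z|].

Definition smooth_point (R : realType) (X : normedModType R) (z : X) : Prop :=
  z != 0 /\ exists f : X -> R, Jset z = [set f].

Definition Sm (R : realType) (X : normedModType R) : set X :=
  [set z | smooth_point z].

Definition G_delta (T : topologicalType) (S : set T) : Prop :=
  exists F : nat -> set T, (forall n, open (F n)) /\ S = \bigcap_n F n.

(* Main.v *)
Require Import Defs.
From HB Require Import structures.
From mathcomp Require Import all_boot all_order all_algebra.
From mathcomp Require Import all_classical all_reals all_analysis.
From mathcomp Require Import ring lra.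
Import Order.TTheory GRing.Theory Num.Theory.
Import numFieldNormedType.Exports.
Local Open Scope classical_set_scope.
Local Open Scope ring_scope.
Set Implicit Arguments. Unset Strict Implicit. Unset Printing Implicit Defensive.


Lemma subgrad_ex (R : realType) (X : normedModType R) (x d : X) :
  exists p : R, `|p| <= `|d| /\ forall s : R, `|x| + s * p <= `|x + s *: d|.
Proof.
pose g s := `|x + s *: d|.
have lip s : `|g s - `|x| | <= `|s| * `|d|.
  by rewrite /g (le_trans (ler_dist_dist _ _)) // addrC addKr normrZ.
have conv s t : s < 0 -> 0 < t -> (g s - `|x|) / s <= (g t - `|x|) / t.
  move=> s0 t0.
  have key : (t - s) * `|x| <= t * g s - s * g t.
    have -> : (t - s) * `|x| = `|t *: (x + s *: d) - s *: (x + t *: d)|.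
      rewrite scalerDr scalerDr scalerA scalerA (mulrC t s) opprD addrA addrAC.
      rewrite addrK -scalerBl normrZ ger0_norm //; lra.
    rewrite (le_trans (ler_normB _ _)) // !normrZ gtr0_norm // ltr0_norm //.
    rewrite /g; lra.
  set a := (g s - `|x|) / s; set b := (g t - `|x|) / t.
  have ha : g s = `|x| + a * s by rewrite /a divfK ?lt_eqF //; ring.
  have hb : g t = `|x| + b * t by rewrite /b divfK ?gt_eqF //; ring.
  rewrite ha hb in key.
  have st : s * t < 0 by rewrite pmulr_llt0.
  nra.
pose E := [set (g s - `|x|) / s | s in [set s : R | s < 0]].
have E1 : E ((g (-1) - `|x|) / (-1)) by exists (-1) => //=; lra.
have ubE : ubound E `|d|.
  move=> _ [s /= s0 <-]; rewrite ler_ndivrMr //.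
  have := lip s; rewrite (ltr0_norm s0) ler_norml => /andP [h _]; lra.
exists (sup E); split.
  rewrite ler_norml; apply/andP; split; last exact: (ge_sup (ex_intro _ _ E1) ubE).
  have h := ub_le_sup (ex_intro _ _ ubE) E1.
  have := lip (-1); rewrite normrN normr1 mul1r ler_norml => /andP [h1 h2].
  move: h; rewrite invrN1 mulrN1; lra.
move=> s; have [s0|s0|->] := ltgtP s 0; last by rewrite mul0r scale0r addr0 addr0.
- have : (g s - `|x|) / s <= sup E by apply: (ub_le_sup (ex_intro _ _ ubE)); exists s.
  rewrite ler_ndivrMr // => h; rewrite /g in h; lra.
- have : sup E <= (g s - `|x|) / s.
    apply: ge_sup; first exact: (ex_intro _ _ E1).
    by move=> _ [t /= t0 <-]; apply: conv.
  rewrite ler_pdivlMr // => h; rewrite /g in h; lra.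
Qed.

Definition SubN (R : realType) (X : normedModType R) (T : X -> X) (x d : X) (p : R) :=
  forall s : R, `|T x| * (`|x| + s * p) <= `|T (x + s *: d)| * `|x|.

Lemma sub_gen (R : realType) (X : normedModType R) (x d : X) (p : R) :
  x != 0 -> `|p| <= `|d| -> (forall s : R, `|x| + s * p <= `|x + s *: d|) ->
  forall a l : R, a * `|x| + l * p <= `|a *: x + l *: d|.
Proof.
move=> x0 pd sub a l.
have nx : 0 < `|x| by rewrite normr_gt0.
have [a0|a0|->] := ltgtP a 0.
- have -> : a *: x + l *: d = a *: (x + (l / a) *: d).
    by rewrite scalerDr scalerA mulrC divfK ?lt_eqF.
  rewrite normrZ (ltr0_norm a0).
  have lb : - `|x + (l / a) *: d| <= `|x| + (l / a) * p.
    have := ler_normD (x + (l / a) *: d) (- x); rewrite addrC addKr normrN normrZ.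
    have h1 := ler_norm ((l / a) * p); rewrite normrM in h1.
    have h2 : `|l / a| * `|p| <= `|l / a| * `|d| by rewrite ler_wpM2l.
    have h3 : - ((l / a) * p) <= `|(l / a) * p| by rewrite -normrN ler_norm.
    rewrite normrM in h3.
    lra.
  have e : a * (l / a) = l by rewrite mulrC divfK ?lt_eqF.
  move: lb; set q := l / a; set v := `|x + q *: d| => lb.
  rewrite -e.
  have : 0 <= (- a) * (`|x| + q * p + v) by apply: mulr_ge0; lra.
  rewrite -/q; nra.
- have h := sub (l / a).
  have -> : a *: x + l *: d = a *: (x + (l / a) *: d).
    by rewrite scalerDr scalerA mulrC divfK ?gt_eqF.
  rewrite normrZ (gtr0_norm a0).
  have e : a * (l / a) = l by rewrite mulrC divfK ?gt_eqF.
  move: h; set q := l / a; set v := `|x + q *: d| => h.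
  rewrite -e -/q.
  have : 0 <= a * (v - `|x| - q * p) by apply: mulr_ge0; lra.
  nra.
- rewrite scale0r add0r mul0r add0r normrZ.
  apply: le_trans (ler_norm _) _; rewrite normrM ler_wpM2l //.
Qed.

Lemma partA (R : realType) (X : normedModType R) (T : {linear X -> X}) (u d : X) :
  preserves_BJ_at T u ->
  exists p : R, `|p| <= `|d| /\ (forall s : R, `|u| + s * p <= `|u + s *: d|)
    /\ SubN T u d p.
Proof.
move=> pres.
have [->|u0] := eqVneq u 0.
  exists 0; split; first by rewrite normr0.
  split=> s; first by rewrite mulr0 addr0 add0r normr0 normr_ge0.
  by rewrite linear0 normr0 mul0r mulr_ge0.
have nu : 0 < `|u| by rewrite normr_gt0.
have [p [pd sub]] := subgrad_ex u d.
exists p; split => //; split => // s.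
pose w := d - (p / `|u|) *: u.
have ew l : u + l *: w = (1 - l * (p / `|u|)) *: u + l *: d.
  rewrite /w scalerBr scalerA scalerBl scale1r.
  by rewrite addrA addrAC.
have bj : BJorth u w.
  move=> l; rewrite ew.
  have := sub_gen u0 pd sub (1 - l * (p / `|u|)) l.
  have -> : (1 - l * (p / `|u|)) * `|u| + l * p = `|u|.
    by field; rewrite gt_eqF.
  by [].
have tbj := pres w bj.
have [b0|b0] := lerP (`|u| + s * p) 0.
  by apply: le_trans (mulr_ge0 (normr_ge0 _) (normr_ge0 _)); rewrite mulr_ge0_le0.
set b := `|u| + s * p in b0 *.
pose l := s * `|u| / b.
have e : u + s *: d = (b / `|u|) *: (u + l *: w).
  rewrite ew scalerDr !scalerA.
  have e1 : b / `|u| * (1 - l * (p / `|u|)) = 1.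
    rewrite /l /b; field; rewrite ?gt_eqF //.
  have e2 : b / `|u| * l = s.
    rewrite /l; field; rewrite ?gt_eqF //.
  by rewrite e1 e2 scale1r.
rewrite e linearZ /= normrZ gtr0_norm ?divr_gt0 //.
rewrite linearD linearZ /=.
have := tbj l.
move=> h.
rewrite -mulrA (mulrC _ `|u|) mulrA divfK ?gt_eqF //.
by rewrite mulrC ler_wpM2l // ltW.
Qed.

Lemma approx_seq (R : realType) (X : normedModType R) (U : set X) (x : X) :
  dense U -> exists u : nat -> X, forall n, U (u n) /\ `|x - u n| < n.+1%:R^-1.
Proof.
move=> dU.
suff [u hu] : {u : nat -> X & forall n, U (u n) /\ `|x - u n| < n.+1%:R^-1} by exists u.
apply: (@choice nat X (fun n y => U y /\ `|x - y| < n.+1%:R^-1)) => n.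
have e0 : 0 < n.+1%:R^-1 :> R by rewrite invr_gt0.
have [y [By Uy]] := dU (ball x n.+1%:R^-1) (ex_intro _ x (ballxx x e0)) (ball_open _ _).
by exists y; split => //; move: By; rewrite -ball_normE.
Qed.

Lemma incr_ge (f : nat -> nat) : increasing_seq f -> forall n, (n <= f n)%N.
Proof.
move=> /increasing_seqP inc; elim => // n ih.
by apply: leq_ltn_trans ih (inc n).
Qed.

Lemma lim_ge0 (R : realType) (h : nat -> R) (L : R) :
  h @ \oo --> L -> (forall n, 0 <= h n) -> 0 <= L.
Proof.
move=> hL h0; rewrite -(cvg_lim _ hL) //.
by apply: limr_ge; [apply/cvg_ex; exists L | near=> n; apply: h0].
Unshelve. all: by end_near.
Qed.

Lemma test (R : realType) (X : normedModType R) (T : {linear X -> X}) (v : nat -> X) (q : nat -> R)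
   (x d : X) (c s : R) : continuous T -> v @ \oo --> x -> q @ \oo --> c ->
  (fun n => `|T (v n + s *: d)| * `|v n| - `|T (v n)| * (`|v n| + s * q n)) @ \oo -->
   (`|T (x + s *: d)| * `|x| - `|T x| * (`|x| + s * c)).
Proof.
move=> cT vx qc.
have vsd : (fun n => v n + s *: d) @ \oo --> x + s *: d by apply: cvgD => //; apply: cvg_cst.
have Tvsd : (fun n => T (v n + s *: d)) @ \oo --> T (x + s *: d).
  exact: (cvg_comp _ _ vsd (cT _)).
have Tv : (fun n => T (v n)) @ \oo --> T x by exact: (cvg_comp _ _ vx (cT _)).
apply: cvgB; apply: cvgM.
- exact: cvg_norm.
- exact: cvg_norm.
- exact: cvg_norm.
- apply: cvgD; first exact: cvg_norm.
  by apply: cvgM => //; apply: cvg_cst.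
Qed.

Lemma partB (R : realType) (X : normedModType R) (T : {linear X -> X}) (U : set X) (x d : X) :
  dense U -> continuous T -> (forall u, U u -> preserves_BJ_at T u) ->
  exists p : R, `|p| <= `|d| /\ (forall s : R, `|x| + s * p <= `|x + s *: d|)
    /\ SubN T x d p.
Proof.
move=> dU cT pres.
have [u hu] := approx_seq x dU.
have [phi hphi] : {phi : nat -> R & forall n, `|phi n| <= `|d| /\
     (forall s : R, `|u n| + s * phi n <= `|u n + s *: d|) /\ SubN T (u n) d (phi n)}.
  apply: (@choice nat R (fun n p => `|p| <= `|d| /\
     (forall s : R, `|u n| + s * p <= `|u n + s *: d|) /\ SubN T (u n) d p)) => n.
  exact: partA (pres _ (hu n).1).
have bnd : bounded_fun phi.
  rewrite /bounded_near /=; near=> M => n _ /=.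
  apply: le_trans (hphi n).1 _; near: M; apply: nbhs_pinfty_ge.
  by rewrite num_real.
have [f incf cvf] := bolzano_weierstrass bnd.
set c := limn (phi \o f).
have qc : (phi \o f) @ \oo --> c := cvf.
have fn := incr_ge incf.
have vx : (u \o f) @ \oo --> x.
  apply/cvgrPdist_lt => e e0.
  near=> n => /=.
  apply: lt_le_trans (hu (f n)).2 _.
  apply: le_trans (_ : n.+1%:R^-1 <= e).
    by rewrite lef_pV2 ?posrE // ler_nat ltnS fn.
  apply: ltW; near: n.
  exact: (near_infty_natSinv_lt (PosNum e0)).
exists c; split; [|split].
- have : 0 <= `|d| - `|c|.
    apply: (@lim_ge0 _ (fun n => `|d| - `|phi (f n)|)).
      by apply: cvgB; [apply: cvg_cst | apply: cvg_norm].
    by move=> n; rewrite subr_ge0 (hphi (f n)).1.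
  lra.
- move=> s.
  have : 0 <= `|x + s *: d| - `|x| - s * c.
    apply: (@lim_ge0 _ (fun n => `|u (f n) + s *: d| - `|u (f n)| - s * phi (f n))).
      apply: cvgB; first apply: cvgB.
      + apply: cvg_norm; apply: cvgD => //; apply: cvg_cst.
      + exact: cvg_norm.
      + by apply: cvgM => //; apply: cvg_cst.
    move=> n; have := (hphi (f n)).2.1 s; lra.
  lra.
- move=> s.
  have : 0 <= `|T (x + s *: d)| * `|x| - `|T x| * (`|x| + s * c).
    apply: (lim_ge0 (test (d:=d) (s:=s) cT vx qc)).
    move=> n /=; have := (hphi (f n)).2.2 s; rewrite /SubN; lra.
  lra.
Unshelve. all: by end_near.
Qed.
Lemma real_step (R : realType) (gt gs Ft Fs h pt ps K m : R) :
  0 < m -> m <= gt -> m <= gs -> 0 <= Ft -> Ft <= K * gt -> 0 <= Fs -> Fs <= K * gs ->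
  0 < h ->
  gt + h * pt <= gs -> gs - h * ps <= gt ->
  Ft * (gt + h * pt) <= Fs * gt -> Fs * (gs - h * ps) <= Ft * gs ->
  `|Fs / gs - Ft / gt| <= K / m * h * (ps - pt).
Proof.
move=> m0 mgt mgs Ft0 FtK Fs0 FsK h0 S1 S2 N1 N2.
have gt0 : 0 < gt by lra.
have gs0 : 0 < gs by lra.
set Rt := Ft / gt; set Rs := Fs / gs.
have eFt : Ft = Rt * gt by rewrite /Rt divfK ?gt_eqF.
have eFs : Fs = Rs * gs by rewrite /Rs divfK ?gt_eqF.
have Rt0 : 0 <= Rt by rewrite divr_ge0 // ltW.
have Rs0 : 0 <= Rs by rewrite divr_ge0 // ltW.
have RtK : Rt <= K by rewrite ler_pdivrMr.
have RsK : Rs <= K by rewrite ler_pdivrMr.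
have hd : 0 <= h * (ps - pt) by lra.
have pp : 0 <= ps - pt by rewrite -(pmulr_rge0 _ h0).
have A : Rs * (gs - h * ps) <= Rt * gt.
  have : (Rs * (gs - h * ps)) * gs <= (Rt * gt) * gs by move: N2; rewrite eFs eFt; lra.
  by rewrite ler_pM2r.
have B : Rt * (gt + h * pt) <= Rs * gs.
  have : (Rt * (gt + h * pt)) * gt <= (Rs * gs) * gt by move: N1; rewrite eFs eFt; lra.
  by rewrite ler_pM2r.
have A' : (Rs - Rt) * gt <= Rs * (h * (ps - pt)).
  have : Rs * (gt - gs + h * ps) <= Rs * (h * (ps - pt)) by apply: ler_wpM2l => //; lra.
  nra.
have B' : (Rt - Rs) * gs <= Rt * (h * (ps - pt)).
  have : Rt * (gs - gt - h * pt) <= Rt * (h * (ps - pt)) by apply: ler_wpM2l => //; lra.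
  nra.
have C : Rs * (h * (ps - pt)) <= K * (h * (ps - pt)) by apply: ler_wpM2r.
have C' : Rt * (h * (ps - pt)) <= K * (h * (ps - pt)) by apply: ler_wpM2r.
have K0 : 0 <= K by lra.
have D : K * (h * (ps - pt)) <= (K / m * h * (ps - pt)) * m.
  have -> : K / m * h * (ps - pt) * m = K * (h * (ps - pt)) by field; rewrite gt_eqF.
  exact: lexx.
have E1 : (Rs - Rt) * gt <= (K / m * h * (ps - pt)) * gt.
  apply: le_trans A' _; apply: le_trans C _; apply: le_trans D _.
  by apply: ler_wpM2l => //; rewrite !mulr_ge0 // ?invr_ge0 ?ltW //; lra.
have E2 : (Rt - Rs) * gs <= (K / m * h * (ps - pt)) * gs.
  apply: le_trans B' _; apply: le_trans C' _; apply: le_trans D _.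
  by apply: ler_wpM2l => //; rewrite !mulr_ge0 // ?invr_ge0 ?ltW //; lra.
rewrite ler_pM2r // in E1; rewrite ler_pM2r // in E2.
rewrite ler_norml; apply/andP; split; lra.
Qed.

Lemma seg (R : realType) (X : normedModType R) (T : {linear X -> X}) (a d : X) (m K : R) :
  0 < m -> (forall t : R, 0 <= t -> t <= 1 -> m <= `|a + t *: d|) ->
  (forall z, `|T z| <= K * `|z|) ->
  (forall z, exists p : R, `|p| <= `|d| /\ (forall s : R, `|z| + s * p <= `|z + s *: d|)
     /\ SubN T z d p) ->
  `|T (a + d)| / `|a + d| = `|T a| / `|a|.
Proof.
move=> m0 hm hK hP.
have [phi hphi] : {phi : R -> R & forall t, `|phi t| <= `|d| /\
   (forall s : R, `|a + t *: d| + s * phi t <= `|a + t *: d + s *: d|) /\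
   SubN T (a + t *: d) d (phi t)}.
  apply: (@choice R R (fun t p => `|p| <= `|d| /\
   (forall s : R, `|a + t *: d| + s * p <= `|a + t *: d + s *: d|) /\
   SubN T (a + t *: d) d p)) => t; exact: hP.
pose g t := `|a + t *: d|.
pose F t := `|T (a + t *: d)|.
have shift t h : a + t *: d + h *: d = a + (t + h) *: d by rewrite -addrA -scalerDl.
have step t s : 0 <= t -> t < s -> s <= 1 ->
    `|F s / g s - F t / g t| <= K / m * (s - t) * (phi s - phi t).
  move=> t0 ts s1.
  have S1 := (hphi t).2.1 (s - t).
  have N1 := (hphi t).2.2 (s - t).
  have S2 := (hphi s).2.1 (- (s - t)).
  have N2 := (hphi s).2.2 (- (s - t)).
  rewrite shift (_ : t + (s - t) = s) in S1 N1; last by ring.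
  rewrite shift (_ : s + - (s - t) = t) in S2 N2; last by ring.
  apply: real_step m0 _ _ _ _ _ _ _ _ _ _ _.
  - by apply: hm => //; lra.
  - by apply: hm => //; lra.
  - exact: normr_ge0.
  - exact: hK.
  - exact: normr_ge0.
  - exact: hK.
  - lra.
  - exact: S1.
  - by move: S2; rewrite mulNr.
  - exact: N1.
  - by move: N2; rewrite mulNr.
have main n : `|F 1 / g 1 - F 0 / g 0| <= K / m * n.+1%:R^-1 * (phi 1 - phi 0).
  pose N : R := n.+1%:R.
  have N0 : 0 < N by rewrite ltr0n.
  pose tk (k : nat) := k%:R / N.
  suff H : forall k, (k <= n.+1)%N ->
      `|F (tk k) / g (tk k) - F 0 / g 0| <= K / m * N^-1 * (phi (tk k) - phi 0).
    by have := H n.+1 (leqnn _); rewrite /tk divff ?gt_eqF.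
  elim=> [_|k ih kn].
    by rewrite /tk mul0r subrr normr0 subrr mulr0.
  have := step (tk k) (tk k.+1).
  have e : tk k.+1 - tk k = N^-1 by rewrite /tk -mulrBl -natrB // subSnn mul1r.
  rewrite e => h.
  have t0 : 0 <= tk k by rewrite /tk divr_ge0 // ltW.
  have ts : tk k < tk k.+1 by rewrite -subr_gt0 e invr_gt0.
  have s1 : tk k.+1 <= 1 by rewrite /tk ler_pdivrMr // mul1r ler_nat.
  have := h t0 ts s1.
  have := ih (ltnW kn).
  move=> h1 h2.
  apply: le_trans (ler_distD (F (tk k) / g (tk k))  _ _) _.
  have -> : K / m * N^-1 * (phi (tk k.+1) - phi 0) =
     K / m * N^-1 * (phi (tk k.+1) - phi (tk k)) + K / m * N^-1 * (phi (tk k) - phi 0) by ring.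
  exact: lerD.
have ha : m <= `|a| by have := hm 0 (lexx _) ler01; rewrite scale0r addr0.
have a0 : 0 < `|a| by lra.
have K0 : 0 <= K by rewrite -(pmulr_lge0 _ a0) (le_trans _ (hK a)).
have ge : forall n : nat, `|F 1 / g 1 - F 0 / g 0| <= (K / m * (2 * `|d|)) * n.+1%:R^-1.
  move=> n; apply: le_trans (main n) _.
  have : phi 1 - phi 0 <= 2 * `|d|.
    have := (hphi 1).1; have := (hphi 0).1; rewrite !ler_norml => /andP [? ?] /andP [? ?]; lra.
  move=> hd.
  have AB : 0 <= K / m * n.+1%:R^-1.
    by rewrite !mulr_ge0 // invr_ge0 ltW.
  have := ler_wpM2l AB hd.
  move=> h; apply: le_trans h _; rewrite le_eqVlt; apply/orP; left; apply/eqP; ring.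
have : `|F 1 / g 1 - F 0 / g 0| = 0.
  apply/eqP; rewrite eq_le normr_ge0 andbT.
  apply/ler_addgt0Pr => e e0; rewrite add0r.
  set C := K / m * (2 * `|d|).
  have C0 : 0 < C + 1.
    have : 0 <= C by rewrite /C !mulr_ge0 // invr_ge0 ltW.
    lra.
  have e1 : 0 < e / (C + 1) by rewrite divr_gt0.
  have [M _ hM] := near_infty_natSinv_lt (PosNum e1).
  have := hM M (leqnn M); rewrite /= => hM'.
  apply: le_trans (ge M) _; rewrite -/C.
  have : (C + 1) * M.+1%:R^-1 <= e by rewrite mulrC -ler_pdivlMr // ltW.
  have : 0 <= M.+1%:R^-1 :> R by rewrite invr_ge0.
  move=> h1 h2; apply: le_trans h2; apply: ler_wpM2r => //; lra.
move/eqP; rewrite normr_eq0 subr_eq0 /F /g scale1r scale0r addr0 => /eqP ->.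
by [].
Qed.

Lemma rr_scale (R : realType) (X : normedModType R) (T : {linear X -> X}) (a : X) (k : R) :
  a != 0 -> k != 0 -> `|T (k *: a)| / `|k *: a| = `|T a| / `|a|.
Proof.
move=> a0 k0; rewrite linearZ /= !normrZ.
by field; rewrite ?normr_eq0 ?a0 ?k0.
Qed.

Lemma rr_eq (R : realType) (X : normedModType R) (T : {linear X -> X}) (K : R) :
  (forall z, `|T z| <= K * `|z|) ->
  (forall z d : X, exists p : R, `|p| <= `|d| /\ (forall s : R, `|z| + s * p <= `|z + s *: d|)
     /\ SubN T z d p) ->
  forall a b : X, a != 0 -> b != 0 -> `|T b| / `|b| = `|T a| / `|a|.
Proof.
move=> hK hP a b a0 b0.
pose f (t : R) := `|a + t *: (b - a)|.
have cf : continuous f.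
  move=> t; apply: cvg_norm; apply: cvgD; first exact: cvg_cst.
  by apply: cvgZ; [exact: cvg_id | exact: cvg_cst].
have [|c c01 hc] := @EVT_min R f 0 1 ler01; first exact: continuous_subspaceT.
have [fc0|fc0] := ltrP 0 (f c).
  have := @seg R X T a (b - a) (f c) K fc0 _ hK (fun z => hP z (b - a)).
  rewrite (addrC a (b - a)) subrK; apply => t t0 t1.
  by apply: hc; rewrite in_itv /= t0 t1.
have e : a + c *: (b - a) = 0.
  by apply/eqP; rewrite -normr_eq0 eq_le normr_ge0 andbT.
have c0 : c != 0.
  by apply: contraNneq a0 => c0; move: e; rewrite c0 scale0r addr0 => ->.
have eb : b = ((c - 1) / c) *: a.
  apply: (scalerI c0); rewrite scalerA mulrC divfK //.
  apply/eqP; rewrite -subr_eq0 scalerBl scale1r opprB -e scalerBr.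
  by rewrite addrCA.
have k0 : (c - 1) / c != 0.
  by apply: contraNneq b0 => k0; rewrite eb k0 scale0r.
by rewrite eb rr_scale.
Qed.

Theorem mainTheorem7 (R : realType) (X : completeNormedModType R)
  (U : set X) (T : {linear X -> X}) :
  dense (@Sm R X) -> G_delta (@Sm R X) ->
  dense U ->
  continuous T ->
  (forall x, U x -> preserves_BJ_at T x) ->
  exists lam : R, 0 <= lam /\ forall x : X, `|T x| = lam * `|x|.
Proof.
move=> _ _ dU cT pres.
have hb := continuous_linear_bounded 0 (cT 0).
have [M [_ hM]] := (linear_boundedP T).1 hb.
have hK : forall z, `|T z| <= (`|M| + 1) * `|z|.
  apply: hM; rewrite (le_lt_trans (ler_norm M)) //; lra.
have hP z d := @partB R X T U z d dU cT pres.
have req := rr_eq hK hP.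
have [[e e0]|ne] := pselect (exists e : X, e != 0).
  exists (`|T e| / `|e|); split; first by rewrite divr_ge0.
  move=> x; have [->|x0] := eqVneq x 0; first by rewrite linear0 !normr0 mulr0.
  by rewrite -(req e x e0 x0) divfK // normr_eq0.
exists 0; split => // x.
have -> : x = 0 by apply: contrapT => /eqP x0; apply: ne; exists x.
by rewrite linear0 !normr0 mulr0.
Qed.
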